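(* For any aggregator $f:[0,1]^2\to[0,1]$ and any $\lambda\in(0,1]$, $$R_\lambda(f)=\sup_{\theta\in\Theta_4}\mathbb E_\theta\big[L(f(\mathbf x(\mathbf s,\lambda)),\omega)-L(f^*(\mathbf s),\omega)\big],$$ where $\Theta_4\subseteq\Theta$ is the set of conditionally independent structures in which each expert has exactly two possible signals, $\mathcal S_1=\mathcal S_2=\{r,b\}$.
   Context: Setting: a binary world state $\omega\in\{0,1\}$ and two experts. An information structure $\theta$ consists of a prior $\mu=\Pr[\omega=1]\in(0,1)$ and finite signal spaces $\mathcal S_1,\mathcal S_2$ with a joint distribution of $(\omega,S_1,S_2)$ under which $S_1,S_2$ are conditionally independent given $\omega$; $\Theta$ is the set of all such structures. For $\lambda\in(0,1]$, expert $i$ with signal $s_i$ reports $x_i(s_i,\lambda)=\frac{\mu^\lambda\Pr[S_i=s_i\mid\omega=1]}{\mu^\lambda\Pr[S_i=s_i\mid\omega=1]+(1-\mu)^\lambda\Pr[S_i=s_i\mid\omega=0]}$, and $\mathbf x(\mathbf s,\lambda)=(x_1(s_1,\lambda),x_2(s_2,\lambda))$. $f^*(\mathbf s)=\Pr_\theta[\omega=1\mid S_1=s_1,S_2=s_2]$. The loss is $L(y,\omega)=(y-\omega)^2$. The regret is $R_\lambda(f)=\sup_{\theta\in\Theta}\mathbb E_\theta[L(f(\mathbf x(\mathbf s,\lambda)),\omega)-L(f^*(\mathbf s),\omega)]$. *)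

(* Defs.v *)
From HB Require Import structures.
From mathcomp Require Import all_boot all_order all_algebra.
From mathcomp Require Import all_classical all_reals all_analysis.
Unset Printing Implicit Defensive.
Import Order.TTheory GRing.Theory Num.Theory.
Local Open Scope ring_scope.
Local Open Scope classical_set_scope.

(* World state omega : bool (true <-> omega = 1).
   An information structure: prior mu = Pr[omega=1] in (0,1), finite signal
   spaces 'I_nS1, 'I_nS2, and likelihoods lik_i w s = Pr[S_i = s | omega = w].
   Conditional independence: Pr[w,s1,s2] = Pr[w] * lik1 w s1 * lik2 w s2. *)
Record infoStruct (R : realType) := InfoStruct {
  nS1 : nat; nS2 : nat;
  prior : R;
  lik1 : bool -> 'I_nS1 -> R;
  lik2 : bool -> 'I_nS2 -> R;
  prior_gt0 : 0 < prior;
  prior_lt1 : prior < 1;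
  lik1_ge0 : forall w s, 0 <= lik1 w s;
  lik1_sum : forall w, \sum_(s < nS1) lik1 w s = 1;
  lik2_ge0 : forall w s, 0 <= lik2 w s;
  lik2_sum : forall w, \sum_(s < nS2) lik2 w s = 1 }.

Section Defs.
Variable R : realType.

Definition priorOf (th : infoStruct R) (w : bool) : R :=
  if w then prior R th else 1 - prior R th.

Definition jointP (th : infoStruct R) (w : bool) (s1 : 'I_(nS1 R th)) (s2 : 'I_(nS2 R th)) : R :=
  priorOf th w * @lik1 R th w s1 * @lik2 R th w s2.

Definition report (mu : R) (n : nat) (lik : bool -> 'I_n -> R) (s : 'I_n) (lam : R) : R :=
  mu `^ lam * lik true s / (mu `^ lam * lik true s + (1 - mu) `^ lam * lik false s).

Definition x1 (th : infoStruct R) (s1 : 'I_(nS1 R th)) (lam : R) : R :=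
  report (prior R th) (nS1 R th) (lik1 R th) s1 lam.
Definition x2 (th : infoStruct R) (s2 : 'I_(nS2 R th)) (lam : R) : R :=
  report (prior R th) (nS2 R th) (lik2 R th) s2 lam.

Definition fstar (th : infoStruct R) (s1 : 'I_(nS1 R th)) (s2 : 'I_(nS2 R th)) : R :=
  jointP th true s1 s2 / (jointP th true s1 s2 + jointP th false s1 s2).

Definition sqloss (y : R) (w : bool) : R := (y - (w%:R : R)) ^+ 2.

Definition excessLoss (f : R -> R -> R) (lam : R) (th : infoStruct R) : R :=
  \sum_(w : bool) \sum_(s1 < nS1 R th) \sum_(s2 < nS2 R th)
    jointP th w s1 s2 *
      (sqloss (f (x1 th s1 lam) (x2 th s2 lam)) w - sqloss (fstar th s1 s2) w).

Definition regret (f : R -> R -> R) (lam : R) : \bar R :=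
  ereal_sup [set (excessLoss f lam th)%:E | th in [set: infoStruct R]].

Definition Theta4 : set (infoStruct R) := [set th | nS1 R th = 2%N /\ nS2 R th = 2%N].

End Defs.

(* Main.v *)
Require Import Defs.
From HB Require Import structures.
From mathcomp Require Import all_boot all_order all_algebra.
From mathcomp Require Import all_classical all_reals all_analysis.
From mathcomp Require Import ring lra.
Import Order.TTheory GRing.Theory Num.Theory.
Local Open Scope classical_set_scope.
Local Open Scope ring_scope.

Lemma core (R : realType) (n : nat) (a b : 'I_n -> R) (Phi : R -> R -> R) (M : R) :
  (forall s, 0 <= a s) -> (forall s, 0 <= b s) ->
  \sum_(s < n) a s = 1 -> \sum_(s < n) b s = 1 ->
  (forall k x y, 0 < k -> Phi (k*x) (k*y) = k * Phi x y) ->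
  Phi 0 0 = 0 ->
  (forall a' b' : 'I_2 -> R, (forall s, 0 <= a' s) -> (forall s, 0 <= b' s) ->
     \sum_(s < 2) a' s = 1 -> \sum_(s < 2) b' s = 1 ->
     \sum_(s < 2) Phi (a' s) (b' s) <= M) ->
  \sum_(s < n) Phi (a s) (b s) <= M.
Proof.
move=> ha hb sa sb hom h00 H.
have hom0 : forall k x y, 0 <= k -> Phi (k*x) (k*y) = k * Phi x y.
  move=> k x y; rewrite le_eqVlt => /orP [/eqP <-|kp]; last exact: hom.
  by rewrite !mul0r h00.
have sum2 : forall F : 'I_2 -> R, \sum_(s < 2) F s = F ord0 + F ord_max.
  by move=> F; rewrite big_ord_recl big_ord1; congr (_ + F _); apply: val_inj.
pose d s := a s - b s.
pose u s := 2 * Phi (a s) (b s) - M * (a s + b s).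
pose dpos s := if 0 < d s then d s else 0.
pose dneg s := if d s <= 0 then - d s else 0.
pose uL s := if d s <= 0 then u s else 0.
pose uH s := if 0 < d s then u s else 0.
have pairs : forall i j, dpos j * uL i + dneg i * uH j <= 0.
  move=> i j; rewrite /dpos /uL /dneg /uH.
  case: (ltrP 0 (d j)) => dj; last by rewrite mul0r add0r; case: ifP => _; rewrite ?mul0r ?mulr0.
  case: (lerP (d i) 0) => di; last by rewrite mulr0 mul0r addr0.
  have hai := ha i; have hbi := hb i; have haj := ha j; have hbj := hb j.
  move: di dj; rewrite /d => di dj.
  have [bi0|bip] := eqVneq (b i) 0.
    have ai0 : a i = 0 by apply/eqP; rewrite eq_le hai andbT -bi0; lra.
    by rewrite /u ai0 bi0 h00; lra.
  have bip' : 0 < b i by rewrite lt_def bip hbi.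
  pose D := a j * b i - a i * b j.
  have Dp : 0 < D.
    have h1 : b j * b i < a j * b i by rewrite ltr_pM2r //; lra.
    have h2 : a i * b j <= b i * b j by rewrite ler_wpM2r //; lra.
    by rewrite /D subr_gt0; apply: le_lt_trans h2 _; rewrite mulrC.
  have D0 : D != 0 by rewrite gt_eqF.
  pose p := (a j - b j) / D.
  pose q := - (a i - b i) / D.
  have pp : 0 <= p by apply: divr_ge0; [lra | exact: ltW].
  have qp : 0 <= q by apply: divr_ge0; [lra | exact: ltW].
  have ge : forall s : 'I_2, 0 <= (if val s == 0%N then p * a i else q * a j).
    by move=> s; case: ifP => _; apply: mulr_ge0.
  have ge' : forall s : 'I_2, 0 <= (if val s == 0%N then p * b i else q * b j).
    by move=> s; case: ifP => _; apply: mulr_ge0.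
  have := H _ _ ge ge'.
  rewrite !sum2 /=.
  have -> : p * a i + q * a j = 1.
    by rewrite /p /q /D; field.
  have -> : p * b i + q * b j = 1 by rewrite /p /q /D; field.
  move=> /(_ erefl erefl).
  rewrite !hom0 //.
  have -> : p * Phi (a i) (b i) + q * Phi (a j) (b j)
      = ((a j - b j) * Phi (a i) (b i) - (a i - b i) * Phi (a j) (b j)) / D.
    by rewrite /p /q /D; field.
  rewrite ler_pdivrMr // => HH.
  have -> : (a j - b j) * u i + - (a i - b i) * u j
     = 2 * (((a j - b j) * Phi (a i) (b i) - (a i - b i) * Phi (a j) (b j)) - M * D).
    by rewrite /u /D; ring.
  rewrite pmulr_rle0 //; lra.
have dd : forall s, dpos s - dneg s = d s.
  move=> s; rewrite /dpos /dneg; case: (ltrP 0 (d s)) => h.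
    by rewrite subr0.
  by rewrite sub0r opprK.
have sd : \sum_(s < n) dpos s = \sum_(s < n) dneg s.
  apply/eqP; rewrite -subr_eq0 -sumrB.
  under eq_bigr do rewrite dd.
  by rewrite /d sumrB sa sb subrr.
have dneg0 : forall s, 0 <= dneg s.
  by move=> s; rewrite /dneg; case: ifP => h //; rewrite oppr_ge0.
have dpos0 : forall s, 0 <= dpos s.
  by move=> s; rewrite /dpos; case: ifP => h //; rewrite ltW.
have Hsum : (\sum_(s < n) dneg s) * \sum_(s < n) u s <= 0.
  have : \sum_(i < n) \sum_(j < n) (dpos j * uL i + dneg i * uH j)
      <= \sum_(i < n) \sum_(j < n) (0:R).
    by apply: ler_sum => i _; apply: ler_sum => j _; exact: pairs.
  rewrite big1_eq big1_eq.
  under eq_bigr do rewrite big_split /= -mulr_suml -mulr_sumr.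
  rewrite big_split /= -mulr_sumr -mulr_suml sd -mulrDr -big_split /=.
  congr (_ * _ <= _); apply: eq_bigr => s _; rewrite /uL /uH.
  by case: (ltrP 0 (d s)) => h; rewrite ?(lt_geF h) ?h ?add0r ?addr0.
have sumu : \sum_(s < n) u s = 2 * \sum_(s < n) Phi (a s) (b s) - M * 2.
  rewrite /u sumrB -mulr_sumr -mulr_sumr big_split sa sb /=.
  congr (_ - M * _); lra.
have [A|A] := eqVneq (\sum_(s < n) dneg s) 0.
  have dn0 := psumr_eq0P (fun s _ => dneg0 s) A.
  rewrite -sd in A.
  have dp0 := psumr_eq0P (fun s _ => dpos0 s) A.
  have ab : forall s, a s = b s.
    move=> s; apply/eqP; rewrite -subr_eq0.
    by have := dd s; rewrite dp0 // dn0 // subrr /d => <-.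
  have -> : \sum_(s < n) Phi (a s) (b s) = \sum_(s < n) b s * Phi 1 1.
    by apply: eq_bigr => s _; rewrite ab -hom0 // mulr1.
  rewrite -mulr_suml sb mul1r.
  have ge : forall s : 'I_2, 0 <= (if val s == 0%N then 1 else 0 : R).
    by move=> s; case: ifP.
  have := H _ _ ge ge.
  by rewrite !sum2 /= addr0 h00 addr0; apply.
have Ap : 0 < \sum_(s < n) dneg s by rewrite lt_def A sumr_ge0.
move: Hsum; rewrite pmulr_rle0 // sumu; lra.
Qed.

Lemma divKK (R : fieldType) (k x y : R) : k != 0 -> (k*x)/(k*y) = x/y.
Proof. by move=> hk; rewrite invfM mulrACA divff // mul1r. Qed.

Section Main.
Variable R : realType.
Variable f : R -> R -> R.
Variable lam : R.

Definition rep (mu al be : R) : R :=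
  mu `^ lam * al / (mu `^ lam * al + (1 - mu) `^ lam * be).

Lemma rep_hom mu k al be : 0 < k -> rep mu (k * al) (k * be) = rep mu al be.
Proof.
move=> kp; rewrite /rep.
have -> : mu `^ lam * (k * al) = k * (mu `^ lam * al) by ring.
have -> : (1 - mu) `^ lam * (k * be) = k * ((1 - mu) `^ lam * be) by ring.
by rewrite -mulrDr divKK // gt_eqF.
Qed.

Definition Phi1 (mu : R) (n2 : nat) (l2 : bool -> 'I_n2 -> R) (al be : R) : R :=
  \sum_(w : bool) \sum_(s2 < n2) ((if w then mu else 1 - mu) * (if w then al else be) * l2 w s2 *
   (sqloss R (f (rep mu al be) (report R mu n2 l2 s2 lam)) w
    - sqloss R ((mu * al * l2 true s2) / (mu * al * l2 true s2 + (1 - mu) * be * l2 false s2)) w)).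

Definition Phi2 (mu : R) (n1 : nat) (l1 : bool -> 'I_n1 -> R) (al be : R) : R :=
  \sum_(w : bool) \sum_(s1 < n1) ((if w then mu else 1 - mu) * l1 w s1 * (if w then al else be) *
   (sqloss R (f (report R mu n1 l1 s1 lam) (rep mu al be)) w
    - sqloss R ((mu * l1 true s1 * al) / (mu * l1 true s1 * al + (1 - mu) * l1 false s1 * be)) w)).

Lemma excess_Phi1 th : excessLoss R f lam th =
  \sum_(s1 < nS1 R th) Phi1 (prior R th) _ (lik2 R th) (lik1 R th true s1) (lik1 R th false s1).
Proof.
rewrite /excessLoss exchange_big /=; apply: eq_bigr => s1 _.
rewrite /Phi1; apply: eq_bigr => w _; apply: eq_bigr => s2 _.
by case: w.
Qed.

Lemma excess_Phi2 th : excessLoss R f lam th =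
  \sum_(s2 < nS2 R th) Phi2 (prior R th) _ (lik1 R th) (lik2 R th true s2) (lik2 R th false s2).
Proof.
rewrite /excessLoss; under eq_bigr do rewrite exchange_big.
rewrite exchange_big /=; apply: eq_bigr => s2 _.
rewrite /Phi2; apply: eq_bigr => w _; apply: eq_bigr => s1 _.
by case: w.
Qed.

Lemma Phi1_hom mu n2 l2 k al be : 0 < k -> Phi1 mu n2 l2 (k * al) (k * be) = k * Phi1 mu n2 l2 al be.
Proof.
move=> kp; rewrite /Phi1 rep_hom // mulr_sumr; apply: eq_bigr => w _.
rewrite mulr_sumr; apply: eq_bigr => s2 _.
have -> : mu * (k * al) * l2 true s2 = k * (mu * al * l2 true s2) by ring.
have -> : (1 - mu) * (k * be) * l2 false s2 = k * ((1 - mu) * be * l2 false s2) by ring.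
rewrite -mulrDr divKK ?gt_eqF //.
by case: w; ring.
Qed.

Lemma Phi2_hom mu n1 l1 k al be : 0 < k -> Phi2 mu n1 l1 (k * al) (k * be) = k * Phi2 mu n1 l1 al be.
Proof.
move=> kp; rewrite /Phi2 rep_hom // mulr_sumr; apply: eq_bigr => w _.
rewrite mulr_sumr; apply: eq_bigr => s1 _.
have -> : mu * l1 true s1 * (k * al) = k * (mu * l1 true s1 * al) by ring.
have -> : (1 - mu) * l1 false s1 * (k * be) = k * ((1 - mu) * l1 false s1 * be) by ring.
rewrite -mulrDr divKK ?gt_eqF //.
by case: w; ring.
Qed.

Lemma Phi1_00 mu n2 l2 : Phi1 mu n2 l2 0 0 = 0.
Proof.
rewrite /Phi1 big1 // => w _; rewrite big1 // => s2 _.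
by case: w; rewrite !(mulr0, mul0r).
Qed.

Lemma Phi2_00 mu n1 l1 : Phi2 mu n1 l1 0 0 = 0.
Proof.
rewrite /Phi2 big1 // => w _; rewrite big1 // => s1 _.
by case: w; rewrite !(mulr0, mul0r).
Qed.

Lemma if_ge0 n (a' b' : 'I_n -> R) : (forall s, 0 <= a' s) -> (forall s, 0 <= b' s) ->
  forall w s, 0 <= (if w then a' s else b' s).
Proof. by move=> ha hb [] s. Qed.

Lemma if_sum n (a' b' : 'I_n -> R) : \sum_(s < n) a' s = 1 -> \sum_(s < n) b' s = 1 ->
  forall w, \sum_(s < n) (if w then a' s else b' s) = 1.
Proof. by move=> ha hb []. Qed.

Lemma step1 th M : (forall th' : infoStruct R, nS1 R th' = 2%N -> excessLoss R f lam th' <= M) ->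
  excessLoss R f lam th <= M.
Proof.
move=> H; rewrite excess_Phi1; apply: core.
- exact: lik1_ge0.
- exact: lik1_ge0.
- exact: lik1_sum.
- exact: lik1_sum.
- by move=> *; apply: Phi1_hom.
- exact: Phi1_00.
move=> a' b' ha hb sa sb.
have := H (@InfoStruct R 2 (nS2 R th) (prior R th) (fun w s => if w then a' s else b' s)
   (lik2 R th) (prior_gt0 R th) (prior_lt1 R th) (@if_ge0 _ _ _ ha hb) (@if_sum _ _ _ sa sb)
   (lik2_ge0 R th) (lik2_sum R th)) erefl.
by rewrite excess_Phi1.
Qed.

Lemma step2 th M : (forall th' : infoStruct R, nS2 R th' = 2%N -> nS1 R th' = nS1 R th ->
     excessLoss R f lam th' <= M) ->
  excessLoss R f lam th <= M.
Proof.
move=> H; rewrite excess_Phi2; apply: core.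
- exact: lik2_ge0.
- exact: lik2_ge0.
- exact: lik2_sum.
- exact: lik2_sum.
- by move=> *; apply: Phi2_hom.
- exact: Phi2_00.
move=> a' b' ha hb sa sb.
have := H (@InfoStruct R (nS1 R th) 2 (prior R th) (lik1 R th) (fun w s => if w then a' s else b' s)
   (prior_gt0 R th) (prior_lt1 R th) (lik1_ge0 R th) (lik1_sum R th) (@if_ge0 _ _ _ ha hb) (@if_sum _ _ _ sa sb)
   ) erefl erefl.
by rewrite excess_Phi2.
Qed.

Lemma key th M : (forall th', Theta4 R th' -> excessLoss R f lam th' <= M) ->
  excessLoss R f lam th <= M.
Proof.
move=> H; apply: step1 => th1 h1; apply: step2 => th2 h2 e; apply: H.
by split => //; rewrite e.
Qed.

End Main.

Theorem mainTheorem2 (R : realType) (f : R -> R -> R) (lam : R)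
  (hf : forall x y : R, 0 <= x <= 1 -> 0 <= y <= 1 -> 0 <= f x y <= 1)
  (hlam : 0 < lam <= 1) :
  regret R f lam = ereal_sup [set (excessLoss R f lam th)%:E | th in Theta4 R].
Proof.
rewrite /regret; set B := [set (excessLoss R f lam th)%:E | th in Theta4 R].
apply/le_anti/andP; split; last first.
  by apply: ereal_sup_le => _ [th h <-]; exists th.
apply: ge_ereal_sup => _ [th _ <-].
have ub : forall th', Theta4 R th' -> ((excessLoss R f lam th')%:E <= ereal_sup B)%E.
  by move=> th' h; apply: ereal_sup_ubound; exists th'.
move: ub; case: (ereal_sup B) => [r| |] ub.
- rewrite lee_fin; apply: key => th' h; by rewrite -lee_fin ub.
- by rewrite leey.
- have := @key R f lam th (excessLoss R f lam th - 1).
  have H : forall th', Theta4 R th' -> excessLoss R f lam th' <= excessLoss R f lam th - 1.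
    by move=> th' h; have := ub th' h; rewrite leeNy_eq.
  by move=> /(_ H) K; exfalso; lra.
Qed.
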